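(* Let $\mathbf{x}\in\mathrm{Gol}^{\triangle}_d\cap\mathcal{S}$. Then $x_{d-1}\leq 1$.
   Context: Fix $\epsilon,\gamma$ with $0<4\gamma<\epsilon<\frac12$. The Goldfarb cube $\mathrm{Gol}_d\subseteq\mathbb{R}^d$ is the set of $\mathbf{x}$ satisfying $-z_1\le x_1\le z_1:=1$, $-z_2\le x_2\le z_2:=1-\epsilon-\epsilon x_1$, and $-z_k\le x_k\le z_k:=1-\epsilon+\epsilon\gamma-\epsilon(x_{k-1}-\gamma x_{k-2})$ for $3\le k\le d$. Its vertices are $\mathbf{v}_\sigma$, $\sigma\in\{-1,1\}^d$, where $\mathbf{v}_\sigma$ is given by $x_1=\sigma_1$, $x_2=\sigma_2(1-\epsilon-\epsilon x_1)$, $x_k=\sigma_k(1-\epsilon+\epsilon\gamma-\epsilon(x_{k-1}-\gamma x_{k-2}))$ for $k\ge3$. The dual Goldfarb cube is $\mathrm{Gol}^{\triangle}_d=\bigcap_{\tau\in\{-1,1\}^d}\{\mathbf{x}\in\mathbb{R}^d:\mathbf{v}_\tau^T\mathbf{x}\le 1\}$. Let $\mathcal{S}:=\{\mathbf{x}\in\mathbb{R}^d: x_1=\ldots=x_{d-2}=0\}$. *)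

(* Defs.v *)
From mathcomp Require Import all_boot all_order all_algebra.
Set Implicit Arguments. Unset Strict Implicit. Unset Printing Implicit Defensive.
Import Order.TTheory GRing.Theory Num.Theory.
Local Open Scope ring_scope.

(* Coordinates are 1-indexed as in the paper: coordinate k (1 <= k <= d)
   of a vector x : 'rV[R]_d is x 0 (k-1). A sign vector sigma in {-1,1}^d is
   represented by s : 'I_d -> bool (true = +1, false = -1). *)

Definition sgn {R : ringType} (b : bool) : R := if b then 1 else -1.

Section Goldfarb.
Variables (R : realFieldType) (eps gam : R) (d : nat).

(* sign of coordinate k (1-based); out of range defaults to +1 (never used) *)
Definition sig_at (s : 'I_d -> bool) (k : nat) : R :=
  match insub k.-1 with Some i => sgn (s i) | None => 1 end.

(* gold_pair s k = (x_k, x_{k+1}) of the vertex v_sigma, for k >= 1 *)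
Fixpoint gold_pair (s : 'I_d -> bool) (k : nat) : R * R :=
  match k with
  | 0 => (0, 0)
  | 1 => let x1 := sig_at s 1 in (x1, sig_at s 2 * (1 - eps - eps * x1))
  | k'.+1 => let p := gold_pair s k' in
             (p.2, sig_at s k.+1 *
                   (1 - eps + eps * gam - eps * (p.2 - gam * p.1)))
  end.

Definition gold_vertex (s : 'I_d -> bool) : 'rV[R]_d :=
  \row_(i < d) (gold_pair s i.+1).1.

Definition dual_gold : pred 'rV[R]_d :=
  fun x => [forall s : {ffun 'I_d -> bool},
              \sum_(i < d) gold_vertex s 0 i * x 0 i <= 1].

Definition subS : pred 'rV[R]_d :=
  fun x => [forall i : 'I_d, (i.+1 <= d - 2)%N ==> (x 0 i == 0)].

End Goldfarb.

(* Main.v *)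
Require Import Defs.
From mathcomp Require Import all_boot all_order all_algebra.
From mathcomp Require Import zify ring lra.
Import Order.TTheory GRing.Theory Num.Theory.
Local Open Scope ring_scope.

Section L.
Variables (R : realFieldType) (eps gam : R) (d : nat).

Lemma gp_S (s : 'I_d -> bool) k : (0 < k)%N ->
  gold_pair eps gam s k.+1 =
  ((gold_pair eps gam s k).2, sig_at R s k.+2 *
     (1 - eps + eps * gam - eps * ((gold_pair eps gam s k).2
          - gam * (gold_pair eps gam s k).1))).
Proof. by case: k. Qed.

Lemma gp_S1 (s : 'I_d -> bool) k : (0 < k)%N ->
  (gold_pair eps gam s k.+1).1 = (gold_pair eps gam s k).2.
Proof. by move=> H; rewrite gp_S. Qed.

Lemma gp_S2 (s : 'I_d -> bool) k : (0 < k)%N ->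
  (gold_pair eps gam s k.+1).2 = sig_at R s k.+2 *
     (1 - eps + eps * gam - eps * ((gold_pair eps gam s k).2
          - gam * (gold_pair eps gam s k).1)).
Proof. by move=> H; rewrite gp_S. Qed.

Lemma gp_ext (s t : 'I_d -> bool) k :
  (forall m, (m <= k.+1)%N -> sig_at R s m = sig_at R t m) ->
  gold_pair eps gam s k = gold_pair eps gam t k.
Proof.
elim: k => [|k IH] H //.
case: k IH H => [|k] IH H.
  by rewrite /= !H.
rewrite gp_S // [in RHS]gp_S // IH; last by move=> m Hm; apply: H; lia.
by rewrite H.
Qed.

Lemma gp_neg (s : 'I_d -> bool) k : (0 < k)%N ->
  (forall m, (0 < m)%N -> (m <= k.+1)%N -> sig_at R s m = -1) ->
  gold_pair eps gam s k = (-1, -1).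
Proof.
elim: k => [|k IH] // _ H.
case: k IH H => [|k] IH H.
  rewrite /= !H //; congr pair; ring.
rewrite gp_S // IH //; last by move=> m Hm Hm'; apply: H; lia.
rewrite H //=; congr pair; ring.
Qed.

Lemma gp_one (s : 'I_d -> bool) k : (0 < k)%N ->
  (forall m, (0 < m)%N -> (m <= k)%N -> sig_at R s m = -1) ->
  sig_at R s k.+1 = 1 ->
  (gold_pair eps gam s k).2 = 1.
Proof.
case: k => [|k] // _ H H1.
case: k H H1 => [|k] H H1.
  rewrite /= H1 H //; ring.
rewrite gp_S // gp_neg //=.
  by rewrite H1; ring.
Qed.

Lemma sig_atE (s : 'I_d -> bool) (j : 'I_d) : sig_at R s j.+1 = sgn (s j).
Proof.
rewrite /sig_at /=; case: insubP => [u _ /= E|]; last by rewrite ltn_ord.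
by congr sgn; congr s; apply: val_inj.
Qed.

Lemma sig_at_lt (s : 'I_d -> bool) m (j : 'I_d) (Hm : (0 < m)%N)
  (Hj : val j = m.-1) : sig_at R s m = sgn (s j).
Proof.
have -> : m = j.+1 by rewrite Hj; lia.
by rewrite sig_atE.
Qed.

End L.

Theorem lemma3 (R : realFieldType) (eps gam : R) (d : nat)
  (Hgam : 0 < gam) (Hge : 4 * gam < eps) (Heps : eps < 1 / 2)
  (Hd : (2 <= d)%N) (x : 'rV[R]_d)
  (Hx : x \in @dual_gold R eps gam d) (HS : x \in @subS R d)
  (i : 'I_d) (Hi : val i = (d - 2)%N) :
  x 0 i <= 1.
Proof.
have Hl : (d.-1 < d)%N by lia.
pose l := Ordinal Hl.
pose s (c : bool) := [ffun j : 'I_d => (val j == (d - 2)%N) || (c && (val j == d.-1))].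
have Hsum : forall c, (gold_pair eps gam (s c) (d.-1)).1 * x 0 i
   + (gold_pair eps gam (s c) (d.-1)).2 * x 0 l <= 1.
  move=> c; move: Hx => /forallP /(_ (s c)).
  rewrite (bigD1 i) //= (bigD1 l) /=; last by rewrite -val_eqE /= Hi; apply/eqP; lia.
  rewrite big1 ?addr0; last first.
    move=> j /andP [Hj1 Hj2].
    move: HS => /forallP /(_ j) /implyP H; rewrite (eqP (H _)) ?mulr0 //.
    have : val j != val i by apply/eqP => E; move/eqP: Hj1; apply; apply: val_inj.
    have : val j != val l by apply/eqP => E; move/eqP: Hj2; apply; apply: val_inj.
    rewrite /= Hi; have := ltn_ord j; lia.
  rewrite !mxE Hi.
  have -> : (d - 2).+1 = d.-1 by lia.
  have -> : (d.-1).+1 = (d.-2).+1.+1 by lia.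
  have E : (d.-2).+1 = d.-1 by lia.
  move=> H; rewrite gp_S // E in H; exact H.
have Hs : forall c m, (0 < m)%N -> (m <= d)%N -> sig_at R (s c) m =
   if m == d.-1 then 1 else if (m == d) && c then 1 else -1.
  move=> c m H1 H2; have Hm' : (m.-1 < d)%N by lia.
  rewrite (@sig_at_lt R d (s c) m (Ordinal Hm')) // ffunE /= /sgn.
  case: c; case: (m =P d.-1) => E1; case: (m =P d) => E2 /=; try lia.
  all: try (have -> : (m.-1 == d - 2)%N = true by apply/eqP; lia).
  all: try (have -> : (m.-1 == d - 2)%N = false by apply/eqP; lia).
  all: try (have -> : (m.-1 == d.-1)%N = true by apply/eqP; lia).
  all: try (have -> : (m.-1 == d.-1)%N = false by apply/eqP; lia).
  all: try by rewrite /= ?orbT ?orbF.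
have H1 : forall c, (gold_pair eps gam (s c) (d.-1)).1 = 1.
  move=> c; case E: d.-1 => [|k]; first lia.
  case: k E => [|k] E.
    by rewrite /= Hs ?E //; lia.
  rewrite gp_S1 // gp_one //.
    move=> m Hm Hm'; rewrite Hs; try lia.
    have -> : (m == d.-1) = false by apply/eqP; lia.
    by have -> : (m == d) = false by apply/eqP; lia.
  by rewrite Hs; try lia; have -> : (k.+2 == d.-1) by apply/eqP; lia.
have H2 : (gold_pair eps gam (s true) (d.-1)).2 = - (gold_pair eps gam (s false) (d.-1)).2.
  case E: d.-1 => [|k]; first lia.
  case: k E => [|k] E.
    rewrite /= !Hs; try lia.
    have -> : (1 == d.-1) by apply/eqP; lia.
    have -> : (2 == d.-1) = false by apply/eqP; lia.
    have -> : (2 == d) by apply/eqP; lia.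
    rewrite /=; ring.
  rewrite gp_S2 // [in RHS]gp_S2 // (@gp_ext R eps gam d (s true) (s false) k.+1); last first.
    have G : forall m, (0 < m)%N -> (m <= k.+2)%N -> sig_at R (s true) m = sig_at R (s false) m.
      move=> m Hm Hm'; rewrite !Hs; try lia.
      by have -> : (m == d) = false by apply/eqP; lia.
    move=> m Hm; case: m Hm => [|m] Hm; last by apply: G.
    by apply: (G 1%N).
  rewrite !Hs; try lia.
  have -> : (k.+3 == d.-1) = false by apply/eqP; lia.
  have -> : (k.+3 == d) by apply/eqP; lia.
  rewrite /=; ring.
have := Hsum true; have := Hsum false.
rewrite !H1 H2; lra.
Qed.
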